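(* Let $\mathbf{C}$ be a category of $\mathbf{FI}$ type and $P$ a character polynomial of degree $\leq c$. Then the expectation $\mathbb{E}_{G_d}[P]:=\frac{1}{|G_d|}\sum_{\sigma\in G_d}P(\sigma)$ does not depend on $d$ for all objects $d\geq c$. Furthermore, if $P$ is the character of a free $\mathbf{C}$-module, then $\mathbb{E}_{G_d}[P]$ is a non-negative integer for every $d$ and is monotonically non-decreasing in $d$ (i.e. $\mathbb{E}_{G_d}[P]\leq\mathbb{E}_{G_e}[P]$ whenever $d\leq e$).
   Context: A category $\mathbf{C}$ is of $\mathbf{FI}$ type if: (1) all Hom-sets are finite; (2) every morphism is a monomorphism and every endomorphism is an isomorphism; (3) for all objects $c,d$ the group $G_d=\mathrm{Aut}_{\mathbf{C}}(d)$ acts transitively on $\mathrm{Hom}_{\mathbf{C}}(c,d)$; (4) for every $d$ only finitely many isomorphism classes of $c$ have $\mathrm{Hom}(c,d)\neq\emptyset$; (5) every pair $c_1\to d\leftarrow c_2$ has a pullback, and every pair $f_i:p\to c_i$ has a weak push-out, i.e. a commutative pullback square $g_i:c_i\to d$ such that for every other pullback square $h_i:c_i\to z$ with $h_1f_1=h_2f_2$ there is a unique $h:d\to z$ with $hg_i=h_i$. Write $c\leq d$ (or $d\geq c$) if $\mathrm{Hom}(c,d)\neq\emptyset$. Binomial set: $\binom{d}{c}=\mathrm{Hom}(c,d)/G_c$. For a conjugacy class $\mu\subseteq G_c$ (write $|\mu|=c$), $\binom{X}{\mu}$ is the class function on every $G_d$ given by $\sigma\mapsto\#\{[f]\in\binom{d}{c}:\exists\psi\in\mu,\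 \sigma f=f\psi\}$. A character polynomial is a $\mathbb{C}$-linear combination of these; it has degree $\leq d$ if each $\binom{X}{\mu}$ appearing nontrivially has $|\mu|\leq d$. For a finite-dimensional $G_c$-representation $V$, $\mathrm{Ind}_c(V)$ is the $\mathbf{C}$-module $d\mapsto\mathbb{C}[\mathrm{Hom}(c,d)]\otimes_{\mathbb{C}[G_c]}V$; a free $\mathbf{C}$-module is a finite direct sum of these, and its character assigns to each $G_d$ the character of its value at $d$. *)

(* Defs.v *)
From HB Require Import structures.
From mathcomp Require Import all_boot all_order all_algebra.
From mathcomp Require Import complex Rstruct.

Set Implicit Arguments.
Unset Strict Implicit.
Unset Printing Implicit Defensive.

Import Order.TTheory GRing.Theory Num.Theory.
Local Open Scope ring_scope.

Definition Cx : numClosedFieldType := (Rdefinitions.R)[i].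

(* A category whose Hom-sets are finite types (axiom (1) of FI type). *)
Record category := Category {
  obj : Type;
  hom : obj -> obj -> finType;
  idm : forall a, hom a a;
  comp : forall a b c, hom b c -> hom a b -> hom a c }.

Arguments idm {_} a.
Arguments comp {_ _ _ _} g f.

Section FI.
Variable C : category.

Definition is_category : Prop :=
  (forall (a b : obj C) (f : hom a b), comp (idm b) f = f /\ comp f (idm a) = f) /\
  (forall (a b c d : obj C) (h : hom c d) (g : hom b c) (f : hom a b),
      comp h (comp g f) = comp (comp h g) f).

Definition is_iso (a b : obj C) (f : hom a b) : Prop :=
  exists g : hom b a, comp g f = idm a /\ comp f g = idm b.

Definition isomorphic (a b : obj C) : Prop := exists f : hom a b, is_iso f.

Definition le_obj (c d : obj C) : Prop := inhabited (hom c d).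

Definition is_pullback (p c1 c2 d : obj C) (g1 : hom p c1) (g2 : hom p c2)
    (f1 : hom c1 d) (f2 : hom c2 d) : Prop :=
  comp f1 g1 = comp f2 g2 /\
  forall (z : obj C) (h1 : hom z c1) (h2 : hom z c2), comp f1 h1 = comp f2 h2 ->
    exists! h : hom z p, comp g1 h = h1 /\ comp g2 h = h2.

Definition FI_type : Prop :=
  is_category /\
  (forall (a b c : obj C) (f : hom b c) (g h : hom a b), comp f g = comp f h -> g = h) /\
  (forall (d : obj C) (f : hom d d), is_iso f) /\
  (forall (c d : obj C) (f g : hom c d), exists s : hom d d, comp s f = g) /\
  (forall d : obj C, exists (n : nat) (cs : 'I_n -> obj C),
      forall c : obj C, le_obj c d -> exists i : 'I_n, isomorphic c (cs i)) /\
  (forall (c1 c2 d : obj C) (f1 : hom c1 d) (f2 : hom c2 d),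
      exists (p : obj C) (g1 : hom p c1) (g2 : hom p c2), is_pullback g1 g2 f1 f2) /\
  (forall (p c1 c2 : obj C) (f1 : hom p c1) (f2 : hom p c2),
      exists (d : obj C) (g1 : hom c1 d) (g2 : hom c2 d),
        is_pullback f1 f2 g1 g2 /\
        forall (z : obj C) (h1 : hom c1 z) (h2 : hom c2 z), is_pullback f1 f2 h1 h2 ->
          exists! h : hom d z, comp h g1 = h1 /\ comp h g2 = h2).

(* conjugacy classes of G_c = Aut(c) = Hom(c,c) *)
Definition is_conj_class (c : obj C) (mu : {set hom c c}) : Prop :=
  exists psi0 : hom c c,
    mu = [set psi | [exists tau : hom c c, comp tau psi == comp psi0 tau]].

Definition binom_set (c d : obj C) : {set {set hom c d}} :=
  [set [set comp f tau | tau : hom c c] | f : hom c d].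

Definition binomX (c : obj C) (mu : {set hom c c}) (d : obj C) (sigma : hom d d) : nat :=
  #|[set O in binom_set c d |
      [exists f in O, exists psi in mu, comp sigma f == comp f psi]]|.

Definition expect (d : obj C) (F : hom d d -> Cx) : Cx :=
  (#|hom d d|%:R)^-1 * \sum_(s : hom d d) F s.

Record cp_term := CpTerm {
  cp_obj : obj C;
  cp_class : {set hom cp_obj cp_obj};
  cp_coef : Cx }.

Definition charpoly := seq cp_term.

Definition is_charpoly (P : charpoly) : Prop :=
  forall t, List.In t P -> is_conj_class (cp_class t).

Definition charpoly_deg_le (P : charpoly) (c : obj C) : Prop :=
  forall t, List.In t P -> cp_coef t != 0 -> le_obj (cp_obj t) c.

Definition cp_eval (P : charpoly) (d : obj C) (sigma : hom d d) : Cx :=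
  \sum_(t <- P) cp_coef t * (binomX (cp_class t) sigma)%:R.

(* finite-dimensional representations of G_c, as matrix representations
   (column-vector convention: tau acts by v |-> rho tau *m v) *)
Record rep_data := RepData {
  rd_obj : obj C;
  rd_dim : nat;
  rd_rep : hom rd_obj rd_obj -> 'M[Cx]_rd_dim }.

Definition is_rep (V : rep_data) : Prop :=
  @rd_rep V (idm (rd_obj V)) = 1%:M /\
  forall g h : hom (rd_obj V) (rd_obj V), @rd_rep V (comp g h) = @rd_rep V g *m @rd_rep V h.

(* Character of Ind_c(V)(d) = C[Hom(c,d)] (x)_{C[G_c]} V at sigma in G_d.
   It is realised as the quotient of W = C[Hom(c,d)] (x)_C V (basis
   Hom(c,d) x 'I_n) by the subspace U spanned by the relations
   (f tau) (x) e_k - f (x) (tau e_k).  The trace of sigma on W/U is the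
   trace on W minus the trace on the (sigma-stable) subspace U. *)
Section Induced.
Variables (V : rep_data) (d : obj C).
Let c := rd_obj V.
Let n := rd_dim V.
Let rho := @rd_rep V.
Let I := (hom c d * 'I_n)%type.
Let m := #|{: I}|.
Let J := (hom c d * hom c c * 'I_n)%type.

Definition ind_basis (x : I) : 'rV[Cx]_m := delta_mx 0 (enum_rank x).

Definition ind_act (sigma : hom d d) : 'M[Cx]_m :=
  \matrix_(i < m, j < m)
    ((enum_val j == (comp sigma (enum_val i).1, (enum_val i).2)) %:R : Cx).

Definition ind_rel (r : J) : 'rV[Cx]_m :=
  let: (f, tau, k) := r in
  ind_basis (comp f tau, k) - \sum_(l < n) rho tau l k *: ind_basis (f, l).

Definition ind_rels : 'M[Cx]_(#|{: J}|, m) := \matrix_(r < #|{: J}|) ind_rel (enum_val r).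

Definition ind_char (sigma : hom d d) : Cx :=
  let B := row_base ind_rels in
  \tr (ind_act sigma) - \tr (B *m ind_act sigma *m pinvmx B).
End Induced.

(* a free C-module: a finite direct sum of Ind_{c_i}(V_i); its character *)
Definition free_module := seq rep_data.

Definition free_char (M : free_module) (d : obj C) (sigma : hom d d) : Cx :=
  \sum_(V <- M) ind_char V sigma.

End FI.

(* Main.v *)
From HB Require Import structures.
From mathcomp Require Import all_boot all_order all_algebra.
From mathcomp Require Import complex Rstruct.
Require Import Defs.
Set Implicit Arguments.
Unset Strict Implicit.
Unset Printing Implicit Defensive.
Import Order.TTheory GRing.Theory Num.Theory.
Local Open Scope ring_scope.

Section LinAlg.
Variable F : numFieldType.

Lemma tr_pid r k : (k <= r)%N -> \tr (pid_mx k : 'M[F]_r) = k%:R.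
Proof.
move=> kr; rewrite /mxtrace.
rewrite (eq_bigr (fun i : 'I_r => ((i < k)%N : nat)%:R)); last first.
  by move=> i _; rewrite mxE eqxx.
rewrite -natr_sum; congr (_%:R).
rewrite -(big_mkord xpredT (fun i => ((i < k)%N : nat))) (@big_cat_nat _ _ _ k 0 r _ _ (leq0n k) kr) /=.
rewrite [X in (_ + X)%N]big_nat_cond [X in (_ + X)%N]big1 ?addn0; last first.
  by move=> i /andP [/andP [ki _] _]; rewrite ltnNge ki.
rewrite big_nat_cond (eq_bigr (fun=> 1%N)); last by move=> i /andP [/andP [_ ->]].
by rewrite -big_nat_cond sum_nat_const_nat subn0 muln1.
Qed.

Lemma trace_idem r (Q : 'M[F]_r) : Q *m Q = Q -> \tr Q = (\rank Q)%:R.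
Proof.
move=> QQ.
set L := col_ebase Q; set U := row_ebase Q; set D := (pid_mx (\rank Q) : 'M[F]_r).
have EQ : Q = L *m D *m U by rewrite mulmx_ebase.
have Lu : L \in unitmx by apply: col_ebase_unit.
have Uu : U \in unitmx by apply: row_ebase_unit.
have DD : D *m D = D by rewrite pid_mx_id // rank_leq_row.
have DULD : D *m (U *m L) *m D = D.
  have h : L *m (D *m (U *m L) *m D) *m U = L *m D *m U.
    by rewrite -EQ -{1}QQ EQ !mulmxA.
  have := congr1 (fun M => invmx L *m M *m invmx U) h.
  by rewrite /= !mulmxA mulVmx // mul1mx !mulmxK.
have -> : \tr Q = \tr D.
  rewrite [in LHS]EQ -mulmxA mxtrace_mulC -{1}DD -!mulmxA mxtrace_mulC.
  by have := congr1 (@mxtrace _ _) DULD.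
by rewrite tr_pid // rank_leq_row.
Qed.

Lemma quot_trace m r (P : 'M[F]_m) (B : 'M_(r, m)) :
  P *m P = P -> row_free B -> (B *m P <= B)%MS ->
  \tr (B *m P *m pinvmx B) = (\rank (B *m P))%:R.
Proof.
move=> PP Bf sub.
set Q := B *m P *m pinvmx B.
have QB : Q *m B = B *m P by rewrite mulmxKpV.
have QQ : Q *m Q = Q.
  apply: (row_free_inj Bf) => /=.
  by rewrite -mulmxA !QB mulmxA QB -mulmxA PP.
by rewrite trace_idem // -(mxrankMfree _ Bf) QB.
Qed.

End LinAlg.

Section Cat.
Variable C : category.
Hypothesis HC : FI_type C.

Lemma comp1f (a b : obj C) (f : hom a b) : comp (idm b) f = f.
Proof. by case: HC => [[H _] _]; case: (H a b f). Qed.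
Lemma compf1 (a b : obj C) (f : hom a b) : comp f (idm a) = f.
Proof. by case: HC => [[H _] _]; case: (H a b f). Qed.
Lemma compA (a b c d : obj C) (h : hom c d) (g : hom b c) (f : hom a b) :
  comp h (comp g f) = comp (comp h g) f.
Proof. by case: HC => [[_ H] _]; apply: H. Qed.
Lemma mono (a b c : obj C) (f : hom b c) : injective (fun g : hom a b => comp f g).
Proof. by case: HC => _ [H _] g h; apply: H. Qed.
Lemma endo_inv (d : obj C) (s : hom d d) :
  exists t : hom d d, comp t s = idm d /\ comp s t = idm d.
Proof. by case: HC => _ [_ [H _]]; apply: H. Qed.
Lemma transit (c d : obj C) (f g : hom c d) : exists s : hom d d, comp s f = g.
Proof. by case: HC => _ [_ [_ [H _]]]; apply: H. Qed.

Lemma rcomp_inj (c d : obj C) (tau : hom c c) : injective (fun g : hom c d => comp g tau).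
Proof.
have [t [t1 t2]] := endo_inv tau.
move=> g h /= E.
by rewrite -(compf1 g) -(compf1 h) -t2 !compA E.
Qed.

Lemma le_obj_trans (a b c : obj C) : le_obj a b -> le_obj b c -> le_obj a c.
Proof. by case=> f [g]; constructor; exact: comp g f. Qed.

Definition K (c d : obj C) (f g : hom c d) : nat := \sum_(s : hom d d) (comp s f == g).

Lemma K_const (c d : obj C) (f g : hom c d) : K f g = K f f.
Proof.
have [s sfg] := transit f g.
rewrite /K (reindex_inj (@mono _ _ _ s)) /=.
apply: eq_bigr => x _.
by rewrite -compA -{1}sfg (inj_eq (@mono _ _ _ s)).
Qed.

Lemma K_mul (c d : obj C) (f : hom c d) : (K f f * #|hom c d| = #|hom d d|)%N.
Proof.
have E s : (\sum_(g : hom c d) (comp s f == g))%N = 1%N.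
  rewrite (bigD1 (comp s f)) //= eqxx big1 // => g /negbTE.
  by rewrite eq_sym => ->.
have -> : #|hom d d| = (\sum_(s : hom d d) \sum_(g : hom c d) (comp s f == g))%N.
  by rewrite (eq_bigr (fun=> 1%N)) // sum1_card.
rewrite exchange_big /= (eq_bigr (fun=> K f f)); last by move=> g _; exact: K_const.
by rewrite big_const iter_addn_0 mulnC.
Qed.


Definition orb (c d : obj C) (f : hom c d) : {set hom c d} := [set comp f tau | tau : hom c c].

Lemma binom_setE (c d : obj C) : binom_set c d = [set orb f | f : hom c d].
Proof. by []. Qed.

Lemma mem_orb_self (c d : obj C) (f : hom c d) : f \in orb f.
Proof. by apply/imsetP; exists (idm c) => //; rewrite compf1. Qed.

Lemma orb_sub (c d : obj C) (f g : hom c d) : g \in orb f -> orb g \subset orb f.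
Proof.
case/imsetP => tau _ ->; apply/subsetP => h /imsetP [a _ ->].
by apply/imsetP; exists (comp tau a) => //; rewrite compA.
Qed.

Lemma orb_eq (c d : obj C) (f g : hom c d) : g \in orb f -> orb g = orb f.
Proof.
move=> gf; apply/eqP; rewrite eqEsubset orb_sub //=; apply: orb_sub.
case/imsetP: gf => tau _ ->.
have [t [t1 t2]] := endo_inv tau.
by apply/imsetP; exists t => //; rewrite -compA t2 compf1.
Qed.

Lemma orb_eqE (c d : obj C) (f g : hom c d) : (orb g == orb f) = (g \in orb f).
Proof.
apply/eqP/idP => [<-|/orb_eq //]; exact: mem_orb_self.
Qed.

Lemma card_orb (c d : obj C) (f : hom c d) : #|orb f| = #|hom c c|.
Proof. by rewrite card_imset ?cardsT //; apply: mono. Qed.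

Lemma card_binom (c d : obj C) : (#|binom_set c d| * #|hom c c| = #|hom c d|)%N.
Proof.
rewrite binom_setE.
have -> : #|hom c d| = (\sum_(f in [set: hom c d]) 1)%N by rewrite sum1_card cardsT.
rewrite (partition_big_imset (@orb c d)) /=.
have -> : [set orb f | f : hom c d] = [set orb x | x in [set: hom c d]].
  by apply/setP => O; apply/imsetP/imsetP => [][f _ ->]; exists f.
rewrite -sum_nat_const; apply: eq_bigr => O /imsetP [f _ ->].
rewrite -(card_orb f) -sum1_card; apply: eq_bigl => g.
by rewrite inE orb_eqE.
Qed.

Lemma conj_stable (c : obj C) (mu : {set hom c c}) (tau t psi : hom c c) :
  is_conj_class mu -> comp t tau = idm c -> comp tau t = idm c ->
  psi \in mu -> comp tau (comp psi t) \in mu.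
Proof.
move=> [psi0 ->] t1 t2; rewrite !inE => /existsP [a /eqP E].
apply/existsP; exists (comp a t); apply/eqP.
rewrite !compA -(compA a t tau) t1 compf1 E.
by rewrite -!compA.
Qed.

Lemma binom_term (c d : obj C) (mu : {set hom c c}) (sigma : hom d d) (f : hom c d) :
  is_conj_class mu ->
  [exists g in orb f, exists psi in mu, comp sigma g == comp g psi] =
  [exists psi in mu, comp sigma f == comp f psi].
Proof.
move=> cmu; apply/existsP/idP => [[g /andP [/imsetP [tau _ ->] /existsP [psi /andP [psimu /eqP E]]]]|H].
  have [t [t1 t2]] := endo_inv tau.
  apply/existsP; exists (comp tau (comp psi t)); rewrite conj_stable //=.
  by rewrite (compA f) (compA (comp f tau)) -E -(compA sigma (comp f tau) t) -(compA f tau t) t2 compf1 eqxx.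
by exists f; rewrite mem_orb_self.
Qed.

Lemma count_exists (c d : obj C) (mu : {set hom c c}) (f : hom c d) :
  (\sum_(sigma : hom d d) [exists psi in mu, comp sigma f == comp f psi] = #|mu| * K f f)%N.
Proof.
have E sigma : ([exists psi in mu, comp sigma f == comp f psi] : nat)
     = (\sum_(psi in mu) (comp sigma f == comp f psi))%N.
  case: existsP => [[psi1 /andP [p1 /eqP e1]]|N].
    rewrite (bigD1 psi1) //= e1 eqxx big1 // => psi /andP [_ ne].
    by apply/eqP; rewrite eqb0; apply: contra ne => /eqP /mono ->.
  by rewrite big1 // => psi pm; apply/eqP; rewrite eqb0; apply/negP => e; apply: N; exists psi; rewrite pm.
rewrite (eq_bigr _ (fun s _ => E s)) exchange_big /= -sum_nat_const.
by apply: eq_bigr => psi _; rewrite -(K_const f (comp f psi)).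
Qed.

Lemma card_sep (T : finType) (B : {set T}) (Q : pred T) :
  #|[set O in B | Q O]| = (\sum_(O in B) Q O)%N.
Proof.
rewrite -sum1_card big_mkcond [RHS]big_mkcond; apply: eq_bigr => O _.
by rewrite inE; case: (O \in B); case: (Q O).
Qed.

Lemma K_eq (c d : obj C) (f g : hom c d) : K f f = K g g.
Proof.
have := K_mul f; rewrite -(K_mul g) => /eqP.
have Hp : (0 < #|hom c d|)%N by apply/card_gt0P; exists f.
by rewrite eqn_pmul2r // => /eqP.
Qed.

Lemma binom_sum (c d : obj C) (mu : {set hom c c}) (f0 : hom c d) :
  is_conj_class mu ->
  ((\sum_(sigma : hom d d) binomX mu sigma) * #|hom c c| = #|mu| * #|hom d d|)%N.
Proof.
move=> cmu.
rewrite /binomX (eq_bigr _ (fun s _ => card_sep _ _)) exchange_big /=.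
rewrite (eq_bigr (fun=> (#|mu| * K f0 f0)%N)); last first.
  move=> O; rewrite binom_setE => /imsetP [f _ ->].
  rewrite (K_eq f0 f) -count_exists; apply: eq_bigr => s _.
  by have /= -> := binom_term s f cmu.
rewrite sum_nat_const -(K_mul f0) -(card_binom c d).
set a := #|binom_set c d|; set b := #|mu|; set k := K f0 f0; set g := #|hom c c|.
by rewrite (mulnC a) -mulnA -mulnA mulnA.
Qed.

Lemma natC_neq0 (k : nat) : (0 < k)%N -> (k%:R : Cx) != 0.
Proof. by rewrite pnatr_eq0 -lt0n. Qed.

Lemma card_hom_gt0 (a b : obj C) (f : hom a b) : (0 < #|hom a b|)%N.
Proof. by apply/card_gt0P; exists f. Qed.

Lemma expect_ext (d : obj C) (F G : hom d d -> Cx) :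
  (forall s, F s = G s) -> expect F = expect G.
Proof. by move=> E; rewrite /expect (eq_bigr _ (fun s _ => E s)). Qed.

Lemma expectD (d : obj C) (F G : hom d d -> Cx) :
  expect (fun s => F s + G s) = expect F + expect G.
Proof. by rewrite /expect big_split mulrDr. Qed.

Lemma expectZ (d : obj C) (a : Cx) (F : hom d d -> Cx) :
  expect (fun s => a * F s) = a * expect F.
Proof. by rewrite /expect -mulr_sumr mulrCA. Qed.

Lemma expect0 (d : obj C) : expect (fun _ : hom d d => 0 : Cx) = 0.
Proof. by rewrite /expect big1 ?mulr0. Qed.

Lemma expect_binom (c d : obj C) (mu : {set hom c c}) (f0 : hom c d) :
  is_conj_class mu ->
  expect (fun s : hom d d => ((binomX mu s)%:R : Cx)) = #|mu|%:R / #|hom c c|%:R.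
Proof.
move=> cmu.
have E := congr1 (fun x => x%:R : Cx) (binom_sum f0 cmu); rewrite /= !natrM natr_sum in E.
have Gn0 := natC_neq0 (card_hom_gt0 (idm c)).
have Nn0 := natC_neq0 (card_hom_gt0 (idm d)).
rewrite /expect; apply: (mulIf Gn0).
by rewrite divfK // -mulrA E mulrCA mulVf ?mulr1.
Qed.

Lemma part1 (c : obj C) (P : charpoly C) :
  is_charpoly P -> charpoly_deg_le P c -> forall d : obj C, le_obj c d ->
  expect (cp_eval P (d:=d)) =
  \sum_(t <- P) cp_coef t * (#|cp_class t|%:R / #|hom (cp_obj t) (cp_obj t)|%:R).
Proof.
move=> HP Hdeg d cd; elim: P HP Hdeg => [|t P IH] HP Hdeg.
  by rewrite big_nil -(expect0 d); apply: expect_ext => s; rewrite /cp_eval big_nil.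
rewrite big_cons.
rewrite (expect_ext (G := fun s => cp_coef t * (binomX (cp_class t) s)%:R + cp_eval P s)); last first.
  by move=> s; rewrite /cp_eval big_cons.
rewrite expectD expectZ IH; last 2 first.
- by move=> u Hu; apply: HP; right.
- by move=> u Hu; apply: Hdeg; right.
congr (_ + _).
have [->|nz] := eqVneq (cp_coef t) 0; first by rewrite !mul0r.
have [f0] : le_obj (cp_obj t) d by apply: le_obj_trans cd; apply: Hdeg => //; left.
by rewrite (expect_binom f0) //; apply: HP; left.
Qed.


Section Ind.
Variables (V : rep_data C) (d : obj C).
Local Notation c := (rd_obj V).
Local Notation n := (rd_dim V).
Local Notation I := (hom c d * 'I_n)%type.
Local Notation m := #|{: I}|.
Local Notation N := #|hom d d|.
Local Notation H := #|hom c d|.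

Definition Tm : 'M[Cx]_(m, n) := \matrix_(i, l) (((enum_val i).2 == l)%:R).
Definition Sm : 'M[Cx]_(n, m) := \matrix_(l, j) ((H%:R)^-1 * ((enum_val j).2 == l)%:R).
Definition Pm : 'M[Cx]_m := (N%:R)^-1 *: \sum_(s : hom d d) ind_act V s.

Lemma Pm_TS : Pm = Tm *m Sm.
Proof.
apply/matrixP => i j; rewrite !mxE summxE.
under eq_bigr => s _ do rewrite !mxE.
under [in RHS]eq_bigr => l _ do rewrite !mxE.
case: (enum_val i) => f k; case: (enum_val j) => g l /=.
rewrite [in RHS](bigD1 k) //= eqxx mul1r [in RHS]big1 ?addr0; last first.
  by move=> l' /= ne; rewrite eq_sym (negbTE ne) mul0r.
rewrite (eq_bigr (fun s => ((comp s f == g) && (l == k))%:R)); last first.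
  by move=> s _; rewrite xpair_eqE eq_sym.
case: (l =P k) => [E|/eqP ne]; last first.
  by rewrite big1 ?mulr0 // => s _; rewrite andbF.
subst l; rewrite ?eqxx ?mulr1.
rewrite (eq_bigr (fun s => ((comp s f == g) : nat)%:R)); last by move=> s _; rewrite andbT.
rewrite -natr_sum -/(K f g) (K_const f g) -(K_mul f) natrM invfM mulrAC mulVf ?mul1r //.
rewrite pnatr_eq0 -lt0n; apply: (@leq_trans 1); first by [].
have : (0 < K f f * #|hom c d|)%N by rewrite K_mul; apply: (card_hom_gt0 (idm d)).
by rewrite muln_gt0 => /andP [].
Qed.

Lemma sum_enum (F : I -> Cx) : \sum_(j < m) F (enum_val j) = \sum_(x : I) F x.
Proof. by rewrite (big_enum_val F). Qed.

Lemma sum_pair (F : hom c d -> 'I_n -> Cx) :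
  \sum_(x : I) F x.1 x.2 = \sum_(f : hom c d) \sum_(k < n) F f k.
Proof. by rewrite pair_bigA. Qed.

Lemma ST (f0 : hom c d) : Sm *m Tm = 1%:M.
Proof.
apply/matrixP => l l'; rewrite !mxE.
under eq_bigr do rewrite !mxE.
rewrite (sum_enum (fun x => (H%:R)^-1 * (x.2 == l)%:R * (x.2 == l')%:R)).
rewrite (sum_pair (fun f k => (H%:R)^-1 * (k == l)%:R * (k == l')%:R)).
rewrite (eq_bigr (fun=> (H%:R)^-1 * (l == l')%:R)); last first.
  move=> f _; rewrite (bigD1 l) //= eqxx mulr1 big1 ?addr0 // => k /= ne.
  by rewrite (negbTE ne) mulr0 mul0r.
rewrite sumr_const.
have -> : #|[pred x : hom c d | true]| = #|hom c d| by apply: eq_card.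
rewrite -mulrnAl -[_^-1 *+ _]mulr_natr mulVf //.
  by rewrite mul1r.
exact: natC_neq0 (card_hom_gt0 f0).
Qed.

Lemma Pm_idem (f0 : hom c d) : Pm *m Pm = Pm.
Proof. by rewrite Pm_TS mulmxA -(mulmxA Tm Sm Tm) (ST f0) mulmx1. Qed.

Lemma Sm_free (f0 : hom c d) : row_free Sm.
Proof.
rewrite /row_free eqn_leq rank_leq_row /=.
by rewrite -{1}(mxrank1 Cx n) -(ST f0) mxrankM_maxl.
Qed.

Lemma rank_Pm (f0 : hom c d) : \rank Pm = n.
Proof.
rewrite Pm_TS (mxrankMfree _ (Sm_free f0)).
apply/eqP; rewrite eqn_leq rank_leq_col /=.
by rewrite -{1}(mxrank1 Cx n) -(ST f0) mxrankM_maxr.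
Qed.

Lemma basisT (x : I) : @ind_basis C V d x *m Tm = delta_mx 0 x.2.
Proof.
rewrite /ind_basis -rowE; apply/matrixP => i l; rewrite !mxE enum_rankK.
by rewrite eq_sym (ord1 i).
Qed.

Definition uu (k : 'I_n) : 'rV[Cx]_m := \sum_(g : hom c d) @ind_basis C V d (g, k).

Lemma basisP (x : I) : @ind_basis C V d x *m Pm = (H%:R)^-1 *: uu x.2.
Proof.
rewrite Pm_TS mulmxA basisT -rowE; apply/matrixP => i j.
rewrite !mxE summxE; congr (_ * _).
under eq_bigr do rewrite !mxE.
case E: (enum_val j) => [g' k'] /=.
have -> : j = enum_rank (g', k') by rewrite -E enum_valK.
rewrite (ord1 i) eqxx /= (bigD1 g') //= (inj_eq enum_rank_inj) xpair_eqE eqxx /=.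
rewrite big1 ?addr0 //.
move=> g ne; rewrite (inj_eq enum_rank_inj) xpair_eqE.
by rewrite eq_sym (negbTE ne).
Qed.

Definition vrel (x : hom c c * 'I_n) : 'rV[Cx]_n :=
  delta_mx 0 x.2 - \sum_(l < n) @rd_rep C V x.1 l x.2 *: delta_mx 0 l.

Lemma relT (f : hom c d) (tau : hom c c) (k : 'I_n) :
  @ind_rel C V d (f, tau, k) *m Tm = vrel (tau, k).
Proof.
rewrite /ind_rel /vrel /= mulmxBl mulmx_suml basisT; congr (_ - _).
apply: eq_bigr => l _.
by rewrite -[_ *m Tm]scalemxAl basisT.
Qed.

Lemma relP (f : hom c d) (tau : hom c c) (k : 'I_n) :
  @ind_rel C V d (f, tau, k) *m Pm = (H%:R)^-1 *: \sum_(g : hom c d) @ind_rel C V d (g, tau, k).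
Proof.
rewrite /ind_rel /= mulmxBl mulmx_suml basisP /=.
rewrite (eq_bigr (fun l => @rd_rep C V tau l k *: ((H%:R)^-1 *: uu l))); last first.
  by move=> l _; rewrite -[_ *m Pm]scalemxAl basisP.
rewrite sumrB.
have -> : \sum_(g : hom c d) @ind_basis C V d (comp g tau, k) = uu k.
  by rewrite /uu [RHS](reindex_inj (@rcomp_inj c d tau)).
rewrite exchange_big /=.
rewrite (eq_bigr (fun l => (H%:R)^-1 *: (@rd_rep C V tau l k *: uu l))); last first.
  by move=> l _; rewrite scalerA mulrC -scalerA.
rewrite -scaler_sumr -scalerBr; congr (_ *: (_ - _)).
rewrite /uu; apply: eq_bigr => l _.
by rewrite scaler_sumr.
Qed.

Lemma rels_stable : (ind_rels V d *m Pm <= ind_rels V d)%MS.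
Proof.
have relsub x : (@ind_rel C V d x <= ind_rels V d)%MS.
  have -> : @ind_rel C V d x = row (enum_rank x) (ind_rels V d).
    by rewrite /ind_rels rowK enum_rankK.
  exact: row_sub.
apply/row_subP => i; rewrite row_mul /ind_rels rowK.
case: (enum_val i) => [[f tau] k]; rewrite relP.
by apply: scalemx_sub; apply: summx_sub => g _; apply: relsub.
Qed.

Definition R0 : 'M[Cx]_(#|{: hom c c * 'I_n}|, n) := \matrix_(r < #|{: hom c c * 'I_n}|) vrel (enum_val r).

Lemma rank_relsT (f0 : hom c d) : \rank (ind_rels V d *m Tm) = \rank R0.
Proof.
apply/eqP; rewrite eqn_leq; apply/andP; split; apply: mxrankS.
  apply/row_subP => i; rewrite row_mul /ind_rels rowK.
  case: (enum_val i) => [[f tau] k]; rewrite relT.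
  have -> : vrel (tau, k) = row (enum_rank (tau, k)) R0 by rewrite rowK enum_rankK.
  exact: row_sub.
apply/row_subP => r; rewrite rowK.
case: (enum_val r) => tau k; rewrite -(relT f0 tau k).
have -> : @ind_rel C V d (f0, tau, k) *m Tm = row (enum_rank (f0, tau, k)) (ind_rels V d *m Tm).
  by rewrite row_mul /ind_rels rowK enum_rankK.
exact: row_sub.
Qed.

Lemma expect_formula :
  expect (ind_char V (d:=d)) =
  \tr Pm - \tr (row_base (ind_rels V d) *m Pm *m pinvmx (row_base (ind_rels V d))).
Proof.
rewrite /expect /ind_char /Pm /= sumrB mulrBr; congr (_ - _).
  by rewrite mxtraceZ raddf_sum.
by rewrite -scalemxAr -scalemxAl mxtraceZ mulmx_sumr mulmx_suml raddf_sum.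
Qed.

Lemma expect_ind_le (f0 : hom c d) : expect (ind_char V (d:=d)) = (n - \rank R0)%:R.
Proof.
rewrite expect_formula trace_idem ?(Pm_idem f0) // quot_trace ?(Pm_idem f0) //; last 2 first.
- exact: row_base_free.
- by rewrite (eqmxMr _ (eq_row_base _)) eq_row_base rels_stable.
rewrite (eqmxMr _ (eq_row_base _)) (rank_Pm f0) Pm_TS mulmxA.
rewrite (mxrankMfree _ (Sm_free f0)) (rank_relsT f0) natrB //.
exact: rank_leq_col.
Qed.

Lemma tr_small k (A : 'M[Cx]_k) : k = 0%N -> \tr A = 0.
Proof. by move=> k0; rewrite /mxtrace big1 // => [[i Hi]] _; exfalso; rewrite k0 in Hi. Qed.

Lemma expect_ind_nle : ~ le_obj c d -> expect (ind_char V (d:=d)) = 0.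
Proof.
move=> nle.
have H0 : #|hom c d| = 0%N.
  apply/eqP; rewrite -leqn0 leqNgt; apply/negP => /card_gt0P [f _]; apply: nle; exact: (inhabits f).
have m0 : m = 0%N by rewrite card_prod H0.
rewrite -(expect0 d); apply: expect_ext => s.
rewrite /ind_char /= !tr_small ?subr0 //.
by apply/eqP; rewrite -leqn0 -m0 rank_leq_col.
Qed.

End Ind.

Lemma ind_nat (V : rep_data C) (d : obj C) : exists k : nat,
  [/\ expect (ind_char V (d:=d)) = (k%:R : Cx),
      (le_obj (rd_obj V) d -> k = (rd_dim V - \rank (R0 V))%N) &
      (~ le_obj (rd_obj V) d -> k = 0%N)].
Proof.
case: (pickP (fun _ : hom (rd_obj V) d => true)) => [f0 _|nf].
  exists (rd_dim V - \rank (R0 V))%N; rewrite (expect_ind_le f0); split => // nle.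
  by exfalso; apply: nle; exact: (inhabits f0).
have nle : ~ le_obj (rd_obj V) d by case=> f; have := nf f.
by exists 0%N; rewrite expect_ind_nle.
Qed.

End Cat.

Lemma expect_free_cons (C : category) (V : rep_data C) (M : free_module C) (d : obj C) :
  expect (free_char (V :: M) (d:=d)) = expect (ind_char V (d:=d)) + expect (free_char M (d:=d)).
Proof. by rewrite -expectD; apply: expect_ext => s; rewrite /free_char big_cons. Qed.

Lemma expect_free_nil (C : category) (d : obj C) :
  expect (free_char ([::] : free_module C) (d:=d)) = 0.
Proof. by rewrite -(expect0 d); apply: expect_ext => s; rewrite /free_char big_nil. Qed.

Theorem mainTheorem13 (C : category) (HC : FI_type C) :
  (forall (c : obj C) (P : charpoly C),
      is_charpoly P -> charpoly_deg_le P c ->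
      forall d e : obj C, le_obj c d -> le_obj c e ->
        expect (cp_eval P (d:=d)) = expect (cp_eval P (d:=e))) /\
  (forall M : free_module C, (forall V, List.In V M -> is_rep V) ->
      (forall d : obj C, exists k : nat, expect (free_char M (d:=d)) = k%:R) /\
      (forall d e : obj C, le_obj d e ->
        expect (free_char M (d:=d)) <= expect (free_char M (d:=e)))).
Proof.
split.
  move=> c P HP Hdeg d e cd ce.
  by rewrite (part1 HC HP Hdeg cd) (part1 HC HP Hdeg ce).
move=> M _; split.
  move=> d; elim: M => [|V M [k IH]].
    by exists 0%N; rewrite expect_free_nil.
  have [k1 [E1 _ _]] := ind_nat HC V d.
  by exists (k1 + k)%N; rewrite expect_free_cons E1 IH natrD.
move=> d e de; elim: M => [|V M IH]; first by rewrite !expect_free_nil.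
rewrite !expect_free_cons; apply: lerD => //.
have [k1 [E1 L1 N1]] := ind_nat HC V d.
have [k2 [E2 L2 N2]] := ind_nat HC V e.
rewrite E1 E2 ler_nat.
case: (pickP (fun _ : hom (rd_obj V) d => true)) => [f0 _|nf].
  have cd : le_obj (rd_obj V) d by exact: (inhabits f0).
  by rewrite (L1 cd) (L2 (le_obj_trans cd de)).
have nle : ~ le_obj (rd_obj V) d by case=> f; have := nf f.
by rewrite (N1 nle).
Qed.
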